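(* Let $M=(Q,R,X,\delta)$ be a rough finite state machine, and let $\delta^*$ and $\delta^{*D}$ be as defined in the context. Then for every $q\in Q$ and all words $x,y\in X^*$, $$\underline{\delta^*(q,xy)}=\underline{\delta^{*D}\big(\underline{\delta^*(q,x)},\,y\big)}\quad\text{and}\quad \overline{\delta^*(q,xy)}=\overline{\delta^{*D}\big(\overline{\delta^*(q,x)},\,y\big)}.$$
   Context: For a finite set $Q$ with an equivalence relation $R$ and $A\subseteq Q$, the lower approximation is $\underline{A}=\bigcup\{[x]\in Q/R: [x]\subseteq A\}$ and the upper approximation is $\overline{A}=\bigcup\{[x]\in Q/R:[x]\cap A\neq\emptyset\}$; the pair $(\underline A,\overline A)$ is the rough set of $A$. A set is definable if it is a union of $R$-classes. A rough finite state machine (RFSM) is a 4-tuple $M=(Q,R,X,\delta)$ where $Q$ is a nonempty finite set of states, $R$ is an equivalence relation on $Q$, $X$ is a nonempty finite set of inputs, and $\delta$ assigns to each $(q,a)\in Q\times X$ a pair $\delta(q,a)=(\underline{\delta(q,a)},\overline{\delta(q,a)})=(\underline{A},\overline{A})$ for some $A\subseteq Q$. $X^*$ denotes the set of finite words over $X$, with empty word $e$. Block transition: for a definable set $D\subseteq Q$ and $a\in X$, $\delta^D(D,a)=(\underline{\delta^D(D,a)},\overline{\delta^D(D,a)})$ with $\underline{\delta^D(D,a)}=\bigcup\{\underline{\delta(q,a)}: q\in B\subseteq D,\ B\in Q/R\}$ and $\overline{\delta^D(D,a)}=\bigcup\{\overline{\delta(q,a)}: q\in B\subseteq D,\ B\in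 Q/R\}$. Extended transition $\delta^*:Q\times X^*\to$ pairs of subsets of $Q$: $\delta^*(q,e)=([q],[q])$, and for $x\in X^*$, $a\in X$: $\underline{\delta^*(q,xa)}=\underline{\delta^D(\underline{\delta^*(q,x)},a)}$ and $\overline{\delta^*(q,xa)}=\overline{\delta^D(\overline{\delta^*(q,x)},a)}$. Extended block transition: for definable $D$ and $x\in X^*$, $\underline{\delta^{*D}(D,x)}=\bigcup\{\underline{\delta^*(q,x)}: q\in B\subseteq D,\ B\in Q/R\}$ and $\overline{\delta^{*D}(D,x)}=\bigcup\{\overline{\delta^*(q,x)}: q\in B\subseteq D,\ B\in Q/R\}$. *)

(* Defs.v *)
From mathcomp Require Import all_boot.
Set Implicit Arguments. Unset Strict Implicit. Unset Printing Implicit Defensive.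

Section RFSM.
Variables (Q X : finType) (R : rel Q).

Definition cls (x : Q) : {set Q} := [set y | R x y].

Definition lowerA (A : {set Q}) : {set Q} :=
  \bigcup_(x | cls x \subset A) cls x.
Definition upperA (A : {set Q}) : {set Q} :=
  \bigcup_(x | cls x :&: A != set0) cls x.

Definition definable (D : {set Q}) : Prop :=
  exists S : {set Q}, D = \bigcup_(x in S) cls x.

Variable delta : Q -> X -> {set Q} * {set Q}.
(* delta q a = (lower(delta q a), upper(delta q a)). *)

(* Block transition: the union over q lying in a class B contained in D.
   (q \in B, B \in Q/R, B \subset D  <->  cls q \subset D, by reflexivity.) *)
Definition blockL (D : {set Q}) (a : X) : {set Q} :=
  \bigcup_(q | cls q \subset D) (delta q a).1.
Definition blockU (D : {set Q}) (a : X) : {set Q} :=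
  \bigcup_(q | cls q \subset D) (delta q a).2.

(* Extended transition delta^* : Q x X^* -> pairs; words are seq X,
   the empty word is [::], and x a is rcons x a (hence foldl). *)
Definition ext_step (p : {set Q} * {set Q}) (a : X) : {set Q} * {set Q} :=
  (blockL p.1 a, blockU p.2 a).
Definition delta_star (q : Q) (w : seq X) : {set Q} * {set Q} :=
  foldl ext_step (cls q, cls q) w.

Definition ext_blockL (D : {set Q}) (w : seq X) : {set Q} :=
  \bigcup_(q | cls q \subset D) (delta_star q w).1.
Definition ext_blockU (D : {set Q}) (w : seq X) : {set Q} :=
  \bigcup_(q | cls q \subset D) (delta_star q w).2.

End RFSM.

(* Main.v *)
Require Import Defs.
From mathcomp Require Import all_boot.
Set Implicit Arguments. Unset Strict Implicit. Unset Printing Implicit Defensive.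

Section Aux.
Variables (Q X : finType) (R : rel Q).
Hypotheses (R_refl : reflexive R) (R_sym : symmetric R) (R_trans : transitive R).

Definition closed (D : {set Q}) := forall u v, R u v -> u \in D -> v \in D.

Lemma cls_closed p : closed (cls R p).
Proof. move=> u v Ruv; rewrite !inE => Rpu; exact: R_trans Rpu Ruv. Qed.

Lemma sub_cls_in D p : closed D -> (cls R p \subset D) = (p \in D).
Proof.
move=> cD; apply/idP/idP.
  by move/subsetP; apply; rewrite inE.
move=> pD; apply/subsetP => v; rewrite inE => Rpv; exact: cD Rpv pD.
Qed.

Lemma bigcup_closed (P : pred Q) (F : Q -> {set Q}) :
  (forall p, closed (F p)) -> closed (\bigcup_(p | P p) F p).
Proof.
move=> cF u v Ruv /bigcupP [p Pp uF]; apply/bigcupP; exists p => //.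
exact: cF Ruv uF.
Qed.

Lemma lowerA_closed A : closed (lowerA R A).
Proof. apply: bigcup_closed => p; exact: cls_closed. Qed.
Lemma upperA_closed A : closed (upperA R A).
Proof. apply: bigcup_closed => p; exact: cls_closed. Qed.

Variable f : Q -> X -> {set Q}.
Hypothesis f_closed : forall q a, closed (f q a).

Definition bl (D : {set Q}) (a : X) := \bigcup_(q | cls R q \subset D) f q a.
Definition G (D : {set Q}) (w : seq X) := foldl bl D w.

Lemma bl_closed D a : closed (bl D a).
Proof. apply: bigcup_closed => p; exact: f_closed. Qed.

Lemma G_closed D w : closed D -> closed (G D w).
Proof. elim: w D => [|a w IH] D cD //=; apply: IH; exact: bl_closed. Qed.

Lemma G_union D w : closed D ->
  G D w = \bigcup_(p | p \in D) G (cls R p) w.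
Proof.
elim: w D => [|a w IH] D cD /=.
  apply/setP => z; apply/idP/bigcupP.
    by move=> zD; exists z => //; rewrite /G /= inE.
  by move=> [p pD]; rewrite /G /= inE => Rpz; exact: cD Rpz pD.
rewrite /G /= -/(G _ _) IH; last exact: bl_closed.
apply/setP => z; apply/bigcupP/bigcupP.
  move=> [r]; rewrite /bl => /bigcupP [q] qD rf zG.
  move: qD; rewrite sub_cls_in // => qD.
  exists q => //; rewrite -/(bl _ _) -/(G _ _) IH; last exact: bl_closed.
  apply/bigcupP; exists r => //; apply/bigcupP; exists q => //.
move=> [p pD]; rewrite -/(G _ _) IH; last exact: bl_closed.
move=> /bigcupP [r /bigcupP [q]]; rewrite sub_cls_in; last exact: cls_closed.
rewrite inE => Rpq rf zG; exists r => //; apply/bigcupP; exists q => //.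
by rewrite sub_cls_in //; exact: cD Rpq pD.
Qed.

End Aux.

Lemma foldl_fst (Q X : finType) (R : rel Q) (delta : Q -> X -> {set Q} * {set Q}) (p : {set Q} * {set Q}) w :
  (foldl (ext_step R delta) p w).1 = G R (fun q a => (delta q a).1) p.1 w.
Proof. by elim: w p => [|a w IH] p //=; rewrite IH. Qed.

Lemma foldl_snd (Q X : finType) (R : rel Q) (delta : Q -> X -> {set Q} * {set Q}) (p : {set Q} * {set Q}) w :
  (foldl (ext_step R delta) p w).2 = G R (fun q a => (delta q a).2) p.2 w.
Proof. by elim: w p => [|a w IH] p //=; rewrite IH. Qed.

Theorem lemma2p1 (Q X : finType) (R : rel Q)
  (R_refl : reflexive R) (R_sym : symmetric R) (R_trans : transitive R)
  (delta : Q -> X -> {set Q} * {set Q})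
  (delta_rough : forall (q : Q) (a : X), exists A : {set Q},
      delta q a = (lowerA R A, upperA R A))
  (q : Q) (x y : seq X) :
  (delta_star R delta q (x ++ y)).1 =
    ext_blockL R delta (delta_star R delta q x).1 y /\
  (delta_star R delta q (x ++ y)).2 =
    ext_blockU R delta (delta_star R delta q x).2 y.
Proof.
have c1 : forall q a, closed R (delta q a).1.
  by move=> p a; case: (delta_rough p a) => A ->; exact: lowerA_closed.
have c2 : forall q a, closed R (delta q a).2.
  by move=> p a; case: (delta_rough p a) => A ->; exact: upperA_closed.
rewrite /ext_blockL /ext_blockU /delta_star !foldl_cat.
split.
- rewrite foldl_fst /=.
  have cD := G_closed c1 (w:=x) (cls_closed R_trans (p:=q)).
  rewrite foldl_fst /= (G_union R_refl R_trans c1 y cD).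
  under [RHS]eq_bigr do rewrite foldl_fst.
  apply: eq_bigl => p; rewrite sub_cls_in //.
- rewrite foldl_snd /=.
  have cD := G_closed c2 (w:=x) (cls_closed R_trans (p:=q)).
  rewrite foldl_snd /= (G_union R_refl R_trans c2 y cD).
  under [RHS]eq_bigr do rewrite foldl_snd.
  apply: eq_bigl => p; rewrite sub_cls_in //.
Qed.
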